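(* Let $p$ be a prime, $S$ a finite $p$-group acting on a finitely generated abelian group $\mathcal{U}$, and $\varepsilon:\mathcal{U}\to\mathbb{F}_p^d$ a surjective homomorphism with $\varepsilon(su)=\varepsilon(u)$ for all $s\in S$, $u\in\mathcal{U}$. Let $L_1\oplus L_2=\mathbb{F}_p^d$ be a direct sum decomposition, $\pi_i$ the projections onto $L_i$ and $\varepsilon_i=\pi_i\circ\varepsilon$ for $i=1,2$. Suppose $C_1,C_2$ are numbers such that $|Su|\geq C_i$ whenever $\varepsilon_i(u)\neq0$ ($i=1,2$). Then $$\operatorname{Rank}(S,\mathcal{U};p)\geq C_1\dim_{\mathbb{F}_p}L_1+C_2\dim_{\mathbb{F}_p}L_2.$$
   Context: A subset $\Gamma\subset\mathcal{U}$ is $p$-generating if the subgroup it generates has finite index prime to $p$. For a finite group $S$ acting on $\mathcal{U}$ with Sylow $p$-subgroup $S_p$, $\operatorname{Rank}(S,\mathcal{U};p)$ is the minimal cardinality of an $S_p$-invariant $p$-generating subset of $\mathcal{U}$. $Su$ denotes the $S$-orbit of $u$. *)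

(* Defs.v *)
From mathcomp Require Import all_boot all_order all_fingroup all_algebra all_solvable.
Set Implicit Arguments. Unset Strict Implicit. Unset Printing Implicit Defensive.
Import GRing.Theory.
Local Open Scope ring_scope.

Definition gen_subgroup (U : zmodType) (gens : seq U) : U -> Prop :=
  fun x => exists c : 'I_(size gens) -> int,
    x = \sum_(i < size gens) gens`_i *~ c i.

Definition fin_generated (U : zmodType) : Prop :=
  exists gens : seq U, forall x : U, gen_subgroup gens x.

Definition has_index (U : zmodType) (H : U -> Prop) (n : nat) : Prop :=
  exists r : seq U,
    [/\ size r = n,
        forall u : U, exists2 i, (i < n)%N & H (u - r`_i)
      & forall i j, (i < n)%N -> (j < n)%N -> H (r`_i - r`_j) -> i = j].

Definition p_generating (p : nat) (U : zmodType) (Gamma : seq U) : Prop :=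
  exists n : nat, has_index (gen_subgroup Gamma) n /\ coprime n p.

(* Gamma (a finite subset of U, given as a duplicate-free list) is invariant
   under the action [act] of S. *)
Definition invariant_set (gT : finGroupType) (S : {set gT}) (U : zmodType)
  (act : gT -> U -> U) (Gamma : seq U) : Prop :=
  forall s g, s \in S -> g \in Gamma -> act s g \in Gamma.

Definition orbit_size (gT : finGroupType) (S : {set gT}) (U : zmodType)
  (act : gT -> U -> U) (u : U) : nat :=
  size (undup [seq act s u | s <- enum S]).

Definition is_zmod_action (gT : finGroupType) (S : {group gT}) (U : zmodType)
  (act : gT -> U -> U) : Prop :=
  [/\ forall u, act 1%g u = u,
      forall s t u, s \in S -> t \in S -> act (s * t)%g u = act s (act t u)
    & forall s x y, s \in S -> act s (x + y) = act s x + act s y].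

(* Main.v *)
Require Import Defs.
From mathcomp Require Import all_boot all_order all_fingroup all_algebra all_solvable.
From mathcomp Require Import all_field zify.
From Stdlib Require Import ClassicalEpsilon.
Set Implicit Arguments. Unset Strict Implicit. Unset Printing Implicit Defensive.
Import GRing.Theory Num.Theory.
Local Open Scope ring_scope.
Section AddFun.
Variables (V W : zmodType) (f : V -> W) (fadd : forall x y, f (x + y) = f x + f y).
Lemma af0 : f 0 = 0.
Proof. by apply: (addrI (f 0)); rewrite -fadd !addr0. Qed.
Lemma afN x : f (- x) = - f x.
Proof. by apply: (addrI (f x)); rewrite -fadd !subrr af0. Qed.
Lemma afB x y : f (x - y) = f x - f y.
Proof. by rewrite fadd afN. Qed.
Lemma afMn x n : f (x *+ n) = f x *+ n.
Proof. by elim: n => [|n IH]; rewrite ?mulr0n ?af0 // !mulrS fadd IH. Qed.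
Lemma afMz x z : f (x *~ z) = f x *~ z.
Proof. by case: z => n; rewrite ?NegzE ?mulrNz ?afN afMn. Qed.
Lemma afsum n (F : 'I_n -> V) : f (\sum_(i < n) F i) = \sum_(i < n) f (F i).
Proof.
elim: n F => [|n IH] F; first by rewrite !big_ord0 af0.
by rewrite !big_ord_recr /= fadd IH.
Qed.
End AddFun.

Lemma gen_sub (U : zmodType) (G : seq U) x y :
  gen_subgroup G x -> gen_subgroup G y -> gen_subgroup G (x - y).
Proof.
move=> [c ->] [c' ->]; exists (fun i => c i - c' i).
by rewrite -sumrB; apply: eq_bigr => i _; rewrite mulrzBr.
Qed.

Lemma span_full (p : nat) (p_pr : prime p) (U : zmodType) (d : nat)
  (eps : U -> 'rV[ 'F_p ]_d)
  (eps_add : forall x y, eps (x + y) = eps x + eps y)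
  (eps_surj : forall v, exists u, eps u = v)
  (Gamma : seq U) (Ggen : p_generating p Gamma) :
  <<map eps Gamma>>%VS = fullv.
Proof.
apply/eqP; apply: contraT => hne.
set V0 := <<map eps Gamma>>%VS.
set Q := (V0^C)%VS.
set psi := daddv_pi Q V0.
have psiV0 : forall v, v \in V0 -> psi v = 0.
  move=> v vV0.
  have := daddv_pi_add (capv_compl V0) (_ : v \in (V0 + V0^C)%VS).
  rewrite addv_complf memvf => /(_ isT).
  rewrite daddv_pi_id ?capv_compl // => /eqP.
  by rewrite -subr_eq0 addrC addKr => /eqP.
have psiQ : forall q, q \in Q -> psi q = q.
  by move=> q qQ; apply: daddv_pi_id => //; rewrite capvC capv_compl.
pose phi u := psi (eps u).
have phi_add : forall x y, phi (x + y) = phi x + phi y.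
  by move=> x y; rewrite /phi eps_add linearD.
have phiH : forall x, gen_subgroup Gamma x -> phi x = 0.
  move=> x [c ->]; apply: psiV0; rewrite (afsum eps_add).
  apply: rpred_sum => i _; rewrite (afMz eps_add); apply: rpredMz.
  by apply: memv_span; apply: map_f; apply: mem_nth.
case: Ggen => n [[r [sr cover uniqr]] cop].
have sig : forall u (i : 'I_n), {j : 'I_n | gen_subgroup Gamma (r`_i + u - r`_j)}.
  move=> u i; apply: constructive_indefinite_description.
  by have [j jn hj] := cover (r`_i + u); exists (Ordinal jn).
pose sigma u i := sval (sig u i).
have sigmaP : forall u (i : 'I_n), gen_subgroup Gamma (r`_i + u - r`_(sigma u i)).
  by move=> u i; rewrite /sigma; case: (sig u i).
have sigma_inj : forall u, injective (sigma u).
  move=> u i i' e; apply/val_inj/(uniqr i i' (ltn_ord i) (ltn_ord i')).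
  have := gen_sub (sigmaP u i) (sigmaP u i'); rewrite e.
  by rewrite opprB addrA subrK [r`_i' + u]addrC addrKA.
have phi_sigma : forall u (i : 'I_n), phi r`_(sigma u i) = phi r`_i + phi u.
  move=> u i; have := phiH _ (sigmaP u i).
  by rewrite (afB phi_add) phi_add => /eqP; rewrite subr_eq0 => /eqP.
pose cnt (c : 'rV['F_p]_d) := #|[set i : 'I_n | phi r`_i == c]|.
have key : forall u c, (cnt c <= cnt (c + phi u)%R)%N.
  move=> u c; rewrite /cnt -(card_imset [set i : 'I_n | phi r`_i == c] (sigma_inj u)).
  apply: subset_leq_card; apply/subsetP => x /imsetP [i]; rewrite !inE => /eqP Hi ->.
  by rewrite phi_sigma Hi.
have cnt_eq : forall q, q \in Q -> cnt q = cnt 0.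
  move=> q qQ; have [u equ] := eps_surj q.
  have phiu : phi u = q by rewrite /phi equ psiQ.
  apply/eqP; rewrite eqn_leq; apply/andP; split.
    have := key (- u) q; by rewrite (afN phi_add) phiu subrr.
  by have := key u 0%R; rewrite phiu add0r.
have ncnt : n = (\sum_(c in Q) cnt 0%R)%N.
  rewrite -[n]card_ord -sum1_card (partition_big (fun i : 'I_n => phi r`_i) predT) //=.
  rewrite (bigID (fun c => c \in Q)) /= [X in (_ + X)%N]big1 ?addn0.
    by apply: eq_bigr => c cQ; rewrite -(cnt_eq c cQ) /cnt sum1_card cardsE.
  move=> c cQ; apply: big_pred0 => i /=.
  by apply/negbTE; apply: contra cQ => e; rewrite -(eqP e); apply: memv_pi.
move: ncnt; rewrite sum_nat_const card_vspace card_Fp // => ncnt.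
have dimQ : (0 < \dim Q)%N.
  rewrite dimv_compl subn_gt0; move: hne; rewrite eqEdim subvf /= ltnNge //.
have pn : (p %| n)%N by rewrite ncnt dvdn_mulr // dvdn_exp.
have := coprime_dvdl pn cop; rewrite prime_coprime //.
by rewrite dvdnn.
Qed.
Local Close Scope ring_scope.
Lemma pick_sub (T : finType) (X : {set T}) k :
  k <= #|X| -> exists2 Y : {set T}, Y \subset X & #|Y| = k.
Proof.
move=> kX; exists [set x in take k (enum X)].
  by apply/subsetP => x; rewrite inE => /mem_take; rewrite mem_enum.
rewrite cardsE; have /card_uniqP -> : uniq (take k (enum X)).
  by apply: take_uniq; apply: enum_uniq.
by rewrite size_takel // -cardE.
Qed.

Lemma split_sets (T : finType) (N1 N2 : {set T}) a b :
  a <= #|N1| -> b <= #|N2| -> a + b <= #|N1 :|: N2| ->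
  exists A : {set T}, exists B : {set T},
    [/\ A \subset N1, B \subset N2, [disjoint A & B], #|A| = a & #|B| = b].
Proof.
move=> h1 h2 h12.
set X := N1 :\: N2.
have cU : #|N1 :|: N2| = #|N2| + #|X|.
  have := cardsID N2 N1; have := cardsU N1 N2.
  have := subset_leq_card (subsetIr N1 N2); rewrite /X; lia.
case: (leqP a #|X|) => aX.
  have [A sA cA] := pick_sub aX.
  have [B sB cB] := pick_sub h2.
  exists A, B; split => //.
    by apply: subset_trans sA (subsetDl _ _).
  rewrite -setI_eq0; apply/eqP/setP => x; rewrite !inE.
  apply/negbTE/negP => /andP [xA xB].
  by move: (subsetP sA x xA) (subsetP sB x xB); rewrite inE => /andP [/negP].
have cI := cardsID N2 N1.
have hA : a - #|X| <= #|N1 :&: N2| by rewrite /X in aX *; lia.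
have [A' sA' cA'] := pick_sub hA.
have sA'2 : A' \subset N2 by apply: subset_trans sA' (subsetIr _ _).
have hB : b <= #|N2 :\: A'| by rewrite cardsD (setIidPr sA'2) cA'; lia.
have [B sB cB] := pick_sub hB.
exists (X :|: A'), B; split.
- by rewrite subUset subsetDl (subset_trans sA' (subsetIl _ _)).
- by apply: subset_trans sB (subsetDl _ _).
- rewrite -setI_eq0; apply/eqP/setP => x; rewrite !inE.
  apply/negbTE/negP => /andP [/orP [xX|xA] xB];
    move: (subsetP sB x xB); rewrite !inE.
    by case/andP: xX => /negbTE -> _; rewrite andbF.
  by rewrite xA.
- rewrite cardsU cA'.
  have -> : X :&: A' = set0.
    apply/setP => x; rewrite !inE; apply/negbTE/negP => /andP [/andP [/negP nx _] xA].
    by apply: nx; apply: (subsetP sA'2).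
  rewrite cards0 subn0; lia.
- exact: cB.
Qed.
Local Open Scope ring_scope.
Lemma dimL_le (F : finFieldType) d (X : seq 'rV[F]_d) (L1 L2 : {vspace 'rV[F]_d}) :
  <<X>>%VS = fullv -> (L1 :&: L2 = 0)%VS ->
  (\dim L1 <= #|[set w in X | daddv_pi L1 L2 w != 0%R]|)%N.
Proof.
move=> hX capL; set N := [set w in X | _].
set pi := daddv_pi L1 L2.
have h : (\dim <<map pi (enum N)>> <= #|N|)%N.
  by rewrite (leq_trans (dim_span _)) // size_map -cardE.
apply: leq_trans h.
apply: dimvS; apply/subvP => x xL1.
rewrite -(daddv_pi_id capL xL1) -/pi.
have : pi x \in (pi @: <<X>>)%VS by apply: memv_img; rewrite hX memvf.
rewrite limg_span; apply: (subvP (_ : <<map pi X>> <= <<map pi (enum N)>>)%VS).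
apply/span_subvP => _ /mapP [w wX ->].
case: (eqVneq (pi w) 0) => [->|nz]; first exact: mem0v.
by apply: memv_span; apply: map_f; rewrite mem_enum inE wX nz.
Qed.

Lemma dimsum_le (F : finFieldType) d (X : seq 'rV[F]_d) (L1 L2 : {vspace 'rV[F]_d}) :
  <<X>>%VS = fullv -> (L1 + L2 = fullv)%VS -> directv (L1 + L2) ->
  (\dim L1 + \dim L2 <= #|[set w in X | daddv_pi L1 L2 w != 0%R] :|:
                          [set w in X | daddv_pi L2 L1 w != 0%R]|)%N.
Proof.
move=> hX hS hD; have capL : (L1 :&: L2 = 0)%VS by apply/directv_addP.
move: hD; rewrite directvE /= => /eqP <-.
set N := _ :|: _.
have h : (\dim <<enum N>> <= #|N|)%N.
  by rewrite (leq_trans (dim_span _)) // -cardE.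
apply: leq_trans h.
apply: dimvS; rewrite hS -hX; apply/span_subvP => w wX.
case: (eqVneq w 0) => [->|nz]; first exact: mem0v.
apply: memv_span; rewrite mem_enum !inE wX /=.
have := daddv_pi_add capL (_ : w \in (L1 + L2)%VS); rewrite hS memvf => /(_ isT) e.
apply: contraR nz; rewrite negb_or !negbK => /andP [/eqP h1 /eqP h2].
by rewrite -e h1 h2 addr0.
Qed.

Import Order.TTheory.

Theorem lemma13p1
  (p : nat) (p_pr : prime p)
  (gT : finGroupType) (S : {group gT}) (pS : (p.-group S)%g)
  (U : zmodType) (U_fg : fin_generated U)
  (act : gT -> U -> U) (act_ok : is_zmod_action S act)
  (d : nat) (eps : U -> 'rV[ 'F_p ]_d)
  (eps_add : forall x y, eps (x + y) = eps x + eps y)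
  (eps_surj : forall v, exists u, eps u = v)
  (eps_inv : forall s u, s \in S -> eps (act s u) = eps u)
  (L1 L2 : {vspace 'rV[ 'F_p ]_d})
  (L_sum : (L1 + L2)%VS = fullv) (L_direct : directv (L1 + L2))
  (R : realFieldType) (C1 C2 : R)
  (hC1 : forall u, daddv_pi L1 L2 (eps u) != 0 -> C1 <= (orbit_size S act u)%:R)
  (hC2 : forall u, daddv_pi L2 L1 (eps u) != 0 -> C2 <= (orbit_size S act u)%:R)
  (Gamma : seq U) (Gamma_uniq : uniq Gamma)
  (Gamma_inv : invariant_set S act Gamma)
  (Gamma_gen : p_generating p Gamma) :
  C1 * (\dim L1)%:R + C2 * (\dim L2)%:R <= (size Gamma)%:R.
Proof.
have hX := span_full p_pr eps_add eps_surj Gamma_gen.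
have capL : (L1 :&: L2 = 0)%VS by apply/directv_addP.
have capL' : (L2 :&: L1 = 0)%VS by rewrite capvC.
have h1 := dimL_le hX capL.
have h2 := dimL_le hX capL'.
have h12 := dimsum_le hX L_sum L_direct.
have [A [B [sA sB dAB cA cB]]] := split_sets h1 h2 h12.
pose f w := count (fun g => eps g == w) Gamma.
have orb : forall g, g \in Gamma -> (orbit_size S act g <= f (eps g))%N.
  move=> g gG; rewrite /orbit_size /f -size_filter.
  apply: uniq_leq_size (undup_uniq _) _ => x; rewrite mem_undup => /mapP [s sS ->].
  move: sS; rewrite mem_enum => sS.
  by rewrite mem_filter eps_inv ?eqxx ?Gamma_inv.
have sizeG : size Gamma = (\sum_w f w)%N.
  rewrite -sum1_size (partition_big (fun g => eps g) predT) //=.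
  by apply: eq_bigr => w _; rewrite sum1_count.
have bA : forall w, w \in A -> C1 <= (f w)%:R.
  move=> w /(subsetP sA); rewrite inE => /andP [/mapP [g gG ->] nz].
  by apply: le_trans (hC1 _ nz) _; rewrite ler_nat; exact: orb.
have bB : forall w, w \in B -> C2 <= (f w)%:R.
  move=> w /(subsetP sB); rewrite inE => /andP [/mapP [g gG ->] nz].
  by apply: le_trans (hC2 _ nz) _; rewrite ler_nat; exact: orb.
apply: (@le_trans _ _ (\sum_(w in A) (f w)%:R + \sum_(w in B) (f w)%:R)).
  rewrite -cA -cB !mulr_natr -!sumr_const.
  by apply: lerD; apply: ler_sum.
rewrite -!natr_sum -natrD ler_nat -bigU //= sizeG.
rewrite big_mkcond; apply: leq_sum => w _; by case: ifP.
Qed.
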